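(* Consider the mixed support-set model described in the context, and let $\mathsf p_1,\dots,\mathsf p_h,\mathsf q_1,\dots,\mathsf q_m$ be $h+m$ distinct sensors. Writing $\phi=\frac{T}{N-T}\epsilon$, $$\Pr\Big(i\in\bigcap_{l=1}^{h}\hat{\mathcal T}_{\mathsf p_l},\ i\in\bigcap_{l=1}^{m}\hat{\mathcal T}_{\mathsf q_l}^{\complement}\Big)=(1-\epsilon)^h\epsilon^m\frac{J}{N}+h(1-\epsilon)\phi^{h-1}(1-\phi)^m\frac{I}{N}+m\,\epsilon\,\phi^{h}(1-\phi)^{m-1}\frac{I}{N}+\phi^{h}(1-\phi)^{m}\frac{N-J-(m+h)I}{N}.$$
   Context: Let $N>T\ge1$ be integers and $\Omega=\{1,\dots,N\}$; complements are taken in $\Omega$. A finite set $\mathcal L$ of sensors is given. Mixed support-set model: there are a fixed set $\mathcal J\subseteq\Omega$ with $|\mathcal J|=J$ and, for each sensor $\mathsf p\in\mathcal L$, a fixed set $\mathcal I_{\mathsf p}\subseteq\Omega$ with $|\mathcal I_{\mathsf p}|=I$, such that $\mathcal I_{\mathsf p}\cap\mathcal J=\emptyset$ for all $\mathsf p$, $\mathcal I_{\mathsf p}\cap\mathcal I_{\mathsf q}=\emptyset$ for $\mathsf p\ne\mathsf q$, and the true support set of sensor $\mathsf p$ is $\mathcal T_{\mathsf p}=\mathcal I_{\mathsf p}\cup\mathcal J$; thus $T=I+J$. Each sensor has a random estimated support set $\hat{\mathcal T}_{\mathsf p}\subseteq\Omega$. A random index $i$ is uniformly distributed on $\Omega$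 and independent of all estimates. System model: there is $\epsilon$ with $0\le\epsilon\le (N-T)/N$, common to all sensors, such that for every sensor $\mathsf p$ and every $j\in\Omega$, $\Pr(j\in\hat{\mathcal T}_{\mathsf p})=1-\epsilon$ if $j\in\mathcal T_{\mathsf p}$ and $\Pr(j\in\hat{\mathcal T}_{\mathsf p})=\frac{T}{N-T}\epsilon$ if $j\notin\mathcal T_{\mathsf p}$ (detection probability $1-\epsilon$, miss probability $\epsilon$, false-alarm probability $\frac{T}{N-T}\epsilon$). For each fixed $j\in\Omega$, the events $\{j\in\hat{\mathcal T}_{\mathsf p}\}$, $\mathsf p\in\mathcal L$, are mutually independent. Convention: $0^0=1$ and a term with coefficient $0$ is $0$. *)

(* Defs.v *)
From mathcomp Require Import all_boot all_order all_algebra.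
Set Implicit Arguments. Unset Strict Implicit. Unset Printing Implicit Defensive.
Import Order.TTheory GRing.Theory Num.Theory.
Local Open Scope ring_scope.

Definition is_prob (R : numDomainType) (S : finType) (P : S -> R) : Prop :=
  (forall w, 0 <= P w) /\ \sum_(w : S) P w = 1.

Definition Pr (R : numDomainType) (S : finType) (P : S -> R) (E : pred S) : R :=
  \sum_(w : S | E w) P w.

(* Main.v *)
Require Import Defs.
From mathcomp Require Import all_boot all_order all_algebra.
From mathcomp Require Import ring.
Import Order.TTheory GRing.Theory Num.Theory.
Local Open Scope ring_scope.

Lemma Pr_ext (R : numDomainType) (S : finType) (P : S -> R) (E F : pred S) :
  (forall w, E w = F w) -> Pr P E = Pr P F.
Proof. by move=> H; apply: eq_bigl. Qed.

Lemma disjP (T : finType) (A B : {set T}) :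
  (forall x, x \in A -> x \in B -> False) -> [disjoint A & B].
Proof.
move=> H; rewrite disjoint_subset; apply/subsetP => x Hx; rewrite inE.
by apply/negP => Hb; exact: H x Hx Hb.
Qed.

Lemma Pr_split (R : numDomainType) (S : finType) (P : S -> R) (E F : pred S) :
  Pr P E = Pr P [pred w | E w && F w] + Pr P [pred w | E w && ~~ F w].
Proof. by rewrite /Pr (bigID F). Qed.

Lemma prod_one (R : comPzRingType) (N : nat) (L : finType) (Iset : L -> {set 'I_N})
  k (f : 'I_k -> L) (x y : R) (j : 'I_N) :
  injective f -> (forall s t, s != t -> [disjoint Iset s & Iset t]) ->
  \prod_(l < k) (if j \in Iset (f l) then x else y) =
  if [exists l, j \in Iset (f l)] then x * y ^+ k.-1 else y ^+ k.
Proof.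
move=> finj dis; case: existsP => [[l0 Hl0]|Hn].
  rewrite (bigD1 l0) //= Hl0; congr (_ * _).
  rewrite (eq_bigr (fun _ => y)) => [|l Hl].
    by rewrite prodr_const cardC1 card_ord.
  have /dis D : f l0 != f l by rewrite (inj_eq finj) eq_sym.
  by rewrite (disjointFr D Hl0).
rewrite (eq_bigr (fun _ => y)) => [|l _].
  by rewrite prodr_const card_ord.
by case: ifP => // H; case: Hn; exists l.
Qed.

Lemma sum_one (R : comPzRingType) (N : nat) (L : finType) (Iset : L -> {set 'I_N})
  k (f : 'I_k -> L) (j : 'I_N) :
  injective f -> (forall s t, s != t -> [disjoint Iset s & Iset t]) ->
  \sum_(l < k) ((j \in Iset (f l))%:R : R) = ([exists l, j \in Iset (f l)])%:R.
Proof.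
move=> finj dis; case: existsP => [[l0 Hl0]|Hn].
  rewrite (bigD1 l0) //= Hl0 big1 ?addr0 // => l Hl.
  have /dis D : f l0 != f l by rewrite (inj_eq finj) eq_sym.
  by rewrite (disjointFr D Hl0).
rewrite big1 // => l _.
have /negbTE -> // : j \notin Iset (f l) by apply/negP => H; apply: Hn; exists l.
Qed.

Lemma mixed (R : numDomainType) (L S : finType) (P : S -> R) (Ev : L -> pred S) :
  (forall A : {set L}, Pr P [pred w | [forall s in A, Ev s w]] =
      \prod_(s in A) Pr P (Ev s)) ->
  forall n (C A : {set L}), #|C| = n -> [disjoint A & C] ->
  Pr P [pred w | [forall s in A, Ev s w] && [forall s in C, ~~ Ev s w]] =
  \prod_(s in A) Pr P (Ev s) * \prod_(s in C) (1 - Pr P (Ev s)).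
Proof.
move=> Hind; elim=> [|n IH] C A HC HAC.
  have C0 : C = set0 by apply/eqP; rewrite -cards_eq0 HC.
  rewrite C0 big_set0 mulr1 -Hind; apply: Pr_ext => w /=.
  rewrite [X in _ && X](_ : _ = true) ?andbT //.
  by apply/forall_inP => s; rewrite inE.
have [c Hc] : exists c, c \in C.
  by apply/set0Pn; rewrite -card_gt0 HC.
have HcA : c \notin A by rewrite (disjointFl HAC Hc).
have HC' : #|C :\ c| = n by rewrite (cardsD1 c C) Hc in HC; case: HC.
have D1 : [disjoint A & C :\ c].
  apply: disjP => s HA /setD1P [_ HsC]; by rewrite (disjointFr HAC HA) in HsC.
have D2 : [disjoint c |: A & C :\ c].
  apply: disjP => s /setU1P [->|HA] /setD1P [Hne HsC].
    by rewrite eqxx in Hne.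
  by rewrite (disjointFr HAC HA) in HsC.
have E1 := IH _ _ HC' D1.
have E2 := IH _ _ HC' D2.
rewrite (@Pr_split _ _ _ _ (Ev c)) in E1.
have -> : Pr P [pred w | [forall s in A, Ev s w] && [forall s in C, ~~ Ev s w]] =
  Pr P [pred w | [pred w | [forall s in A, Ev s w] && [forall s in C :\ c, ~~ Ev s w]] w && ~~ Ev c w].
  apply: Pr_ext => w /=; rewrite -andbA; congr (_ && _).
  apply/forall_inP/andP => [H|[/forall_inP H1 H2] s Hs].
    split; last by apply: H.
    by apply/forall_inP => s /setD1P [_ ?]; apply: H.
  by case: (eqVneq s c) => [->//|Hne]; apply: H1; rewrite in_setD1 Hne Hs.
have E3 : Pr P [pred w | [pred w | [forall s in A, Ev s w] && [forall s in C :\ c, ~~ Ev s w]] w && Ev c w] =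
  Pr P [pred w | [forall s in c |: A, Ev s w] && [forall s in C :\ c, ~~ Ev s w]].
  apply: Pr_ext => w /=; rewrite andbAC; congr (_ && _).
  apply/andP/forall_inP => [[/forall_inP H1 H2] s /setU1P [->//|Hs]|H].
    by apply: H1.
  split; last by apply: H; rewrite setU11.
  by apply/forall_inP => s Hs; apply: H; rewrite setU1r.
rewrite E3 E2 big_setU1 //= in E1.
rewrite (bigD1 c Hc) /=.
have -> : \prod_(s in C | s != c) (1 - Pr P (Ev s)) = \prod_(s in C :\ c) (1 - Pr P (Ev s)).
  by apply: eq_bigl => s; rewrite !inE andbC.
rewrite -[LHS]add0r -(subrr (\prod_(s in A) Pr P (Ev s) *
  (Pr P (Ev c) * \prod_(s in C :\ c) (1 - Pr P (Ev s))))).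
rewrite -addrA addrC -addrA.
set Q := (Pr P _ + _).
have -> : Q = \prod_(i in A) Pr P (Ev i) * \prod_(s in C :\ c) (1 - Pr P (Ev s)).
  rewrite -E1 /Q addrC; congr (_ + _).
  ring.
ring.
Qed.

Lemma sum_ind (R : comPzRingType) (N : nat) (X : {set 'I_N}) (x : R) :
  \sum_(j : 'I_N) (j \in X)%:R * x = #|X|%:R * x.
Proof.
rewrite (eq_bigr (fun j => if j \in X then x else 0)) => [|j _].
  by rewrite -big_mkcond sumr_const mulr_natl.
by case: (j \in X); rewrite ?mul1r ?mul0r.
Qed.

Theorem lemma3 (R : realFieldType) (N T I J : nat) (L : finType)
  (Jset : {set 'I_N}) (Iset : L -> {set 'I_N})
  (S : finType) (P : S -> R)
  (est : L -> S -> {set 'I_N}) (idx : S -> 'I_N) (eps : R)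
  (h m : nat) (p : 'I_h -> L) (q : 'I_m -> L) :
  (T < N)%N -> (1 <= T)%N -> T = (I + J)%N ->
  #|Jset| = J ->
  (forall s, #|Iset s| = I) ->
  (forall s, [disjoint Iset s & Jset]) ->
  (forall s t, s != t -> [disjoint Iset s & Iset t]) ->
  is_prob P ->
  0 <= eps -> eps <= (N%:R - T%:R) / N%:R ->
  (forall s (j : 'I_N),
      Pr P [pred w | j \in est s w] =
      if j \in Iset s :|: Jset then 1 - eps
      else T%:R / (N%:R - T%:R) * eps) ->
  (forall (j : 'I_N) (A : {set L}),
      Pr P [pred w | [forall s in A, j \in est s w]] =
      \prod_(s in A) Pr P [pred w | j \in est s w]) ->
  (forall j : 'I_N, Pr P [pred w | idx w == j] = 1 / N%:R) ->
  (forall (j : 'I_N) (B : {set {ffun L -> {set 'I_N}}}),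
      Pr P [pred w | (idx w == j) && ([ffun s => est s w] \in B)] =
      Pr P [pred w | idx w == j] * Pr P [pred w | [ffun s => est s w] \in B]) ->
  injective p -> injective q -> (forall a b, p a != q b) ->
  let phi := T%:R / (N%:R - T%:R) * eps in
  Pr P [pred w | [forall l, idx w \in est (p l) w] &&
                 [forall l, idx w \notin est (q l) w]] =
    (1 - eps) ^+ h * eps ^+ m * (J%:R / N%:R)
  + h%:R * (1 - eps) * phi ^+ h.-1 * (1 - phi) ^+ m * (I%:R / N%:R)
  + m%:R * eps * phi ^+ h * (1 - phi) ^+ m.-1 * (I%:R / N%:R)
  + phi ^+ h * (1 - phi) ^+ m
      * ((N%:R - J%:R - (m + h)%:R * I%:R) / N%:R).
Proof.
move=> HTN HT1 HTIJ HJ HI HdisJ HdisI Hprob Heps0 Heps1 Hmarg Hind Hunif Hidx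
  pinj qinj hpq phi.
have Hm : forall s j, Pr P [pred w | j \in est s w] =
   if (j \in Iset s) || (j \in Jset) then 1 - eps else phi.
  by move=> s j; rewrite Hmarg in_setU.
set ev := fun (j : 'I_N) w => [forall l, j \in est (p l) w] &&
                 [forall l, j \notin est (q l) w].
have S1 : Pr P [pred w | [forall l, idx w \in est (p l) w] &&
                 [forall l, idx w \notin est (q l) w]] =
   \sum_(j : 'I_N) Pr P [pred w | (idx w == j) && ev j w].
  rewrite /Pr (partition_big idx predT) //=; apply: eq_bigr => j _.
  apply: eq_bigl => w /=.
  by case: (eqVneq (idx w) j) => [->|]; rewrite ?andbT ?andbF.
have S2 : forall j, Pr P [pred w | (idx w == j) && ev j w] =
   1 / N%:R * Pr P [pred w | ev j w].
  move=> j.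
  pose B := [set f : {ffun L -> {set 'I_N}} | [forall l, j \in f (p l)] &&
              [forall l, j \notin f (q l)]].
  have HB : forall w, ([ffun s => est s w] \in B) = ev j w.
    move=> w; rewrite inE /ev; congr (_ && _); apply: eq_forallb => l;
      by rewrite ffunE.
  have E : Pr P [pred w | ev j w] = Pr P [pred w | [ffun s => est s w] \in B].
    by apply: Pr_ext => w; rewrite /= HB.
  rewrite E -(Hunif j) -(Hidx j B); apply: Pr_ext => w /=; by rewrite HB.
have fimg : forall (X : pred L) k (f : 'I_k -> L),
    [forall s in f @: setT, X s] = [forall l, X (f l)].
  move=> X k f; apply/forall_inP/forallP => H.
    by move=> l; apply: H; apply: imset_f; rewrite in_setT.
  by move=> s /imsetP [l _ ->].
have S3 : forall j, Pr P [pred w | ev j w] =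
    \prod_(l < h) Pr P [pred w | j \in est (p l) w] *
    \prod_(l < m) (1 - Pr P [pred w | j \in est (q l) w]).
  move=> j.
  have Dpq : [disjoint p @: setT & q @: setT].
    apply: disjP => s /imsetP [a _ ->] /imsetP [b _ /eqP E].
    by rewrite (negbTE (hpq a b)) in E.
  have := @mixed R L S P (fun s w => j \in est s w) (Hind j) _ _ _ erefl Dpq.
  have pi : {in [set: 'I_h] &, injective p} by move=> a b _ _; apply: pinj.
  have qi : {in [set: 'I_m] &, injective q} by move=> a b _ _; apply: qinj.
  rewrite (big_imset _ pi) (big_imset _ qi) /=.
  have bT : forall k (F : 'I_k -> R), \prod_(i in [set: 'I_k]) F i = \prod_(i < k) F i.
    by move=> k F; apply: eq_bigl => i; rewrite in_setT.
  rewrite !bT => E; etransitivity; last exact: E.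
  apply: Pr_ext => w /=.
  by rewrite /ev !fimg.
set cJ := (1 - eps) ^+ h * eps ^+ m.
set cP := (1 - eps) * phi ^+ h.-1 * (1 - phi) ^+ m.
set cQ := phi ^+ h * eps * (1 - phi) ^+ m.-1.
set c0 := phi ^+ h * (1 - phi) ^+ m.
have key : forall j : 'I_N,
  \prod_(l < h) Pr P [pred w | j \in est (p l) w] *
    \prod_(l < m) (1 - Pr P [pred w | j \in est (q l) w]) =
  c0 + (j \in Jset)%:R * (cJ - c0)
     + \sum_(l < h) (j \in Iset (p l))%:R * (cP - c0)
     + \sum_(l < m) (j \in Iset (q l))%:R * (cQ - c0).
  move=> j.
  rewrite -!big_distrl /= (sum_one _ _ _ _ _ _ _ pinj HdisI) (sum_one _ _ _ _ _ _ _ qinj HdisI).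
  under eq_bigr do rewrite Hm.
  under [X in _ * X]eq_bigr do rewrite Hm.
  case Hj: (j \in Jset).
    have nE : forall k (f : 'I_k -> L), [exists l, j \in Iset (f l)] = false.
      move=> k f; apply/existsP => [[l Hl]].
      by rewrite (disjointFr (HdisJ _) Hl) in Hj.
    rewrite !nE.
    rewrite (eq_bigr (fun _ => 1 - eps)) => [|l _]; last by rewrite orbT.
    rewrite [X in _ * X](eq_bigr (fun _ => eps)) => [|l _]; last first.
      by rewrite orbT opprB addrC subrK.
    by rewrite !prodr_const !card_ord /= mul1r !mul0r !addr0 [RHS]addrC subrK.
  rewrite (eq_bigr (fun l => if j \in Iset (p l) then 1 - eps else phi))
    => [|l _]; last by rewrite orbF.
  rewrite [X in _ * X](eq_bigr (fun l => if j \in Iset (q l) then eps else 1 - phi))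
    => [|l _]; last by rewrite orbF; case: ifP; rewrite // opprB addrC subrK.
  rewrite (prod_one _ _ _ _ _ _ _ _ _ pinj HdisI) (prod_one _ _ _ _ _ _ _ _ _ qinj HdisI).
  case: existsP => [[a Ha]|Hna]; case: existsP => [[b Hb]|Hnb] /=.
  - have := HdisI _ _ (hpq a b).
    by move/disjointFr => /(_ _ Ha); rewrite Hb.
  - by rewrite /= !mul0r mul1r !addr0 [RHS]addrC subrK.
  - by rewrite /= !mul0r mul1r !addr0 [RHS]addrC subrK /cQ mulrA.
  - by rewrite /= !mul0r !addr0.
rewrite S1.
under eq_bigr do rewrite S2 S3 key.
rewrite -big_distrr !big_split sumr_const card_ord sum_ind HJ.
rewrite /=.
rewrite [X in _ + X + _]exchange_big [X in _ + X]exchange_big /=.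
rewrite (eq_bigr (fun _ => I%:R * (cP - c0))) => [|l _]; last by rewrite sum_ind HI.
rewrite [X in _ + X](eq_bigr (fun _ => I%:R * (cQ - c0))) => [|l _]; last by rewrite sum_ind HI.
rewrite !sumr_const !card_ord -(mulr_natl c0 N) -(mulr_natl (I%:R * (cP - c0)) h).
rewrite -(mulr_natl (I%:R * (cQ - c0)) m) natrD.
have N0 : N%:R != 0 :> R by rewrite pnatr_eq0 -lt0n; apply: leq_ltn_trans HTN.
rewrite /c0 /cJ /cP /cQ.
move: (phi ^+ h) (phi ^+ h.-1) ((1 - phi) ^+ m) ((1 - phi) ^+ m.-1) ((1 - eps) ^+ h) (eps ^+ m) => a b c d e f.
move: N0; move: (N%:R : R) (J%:R : R) (I%:R : R) (h%:R : R) (m%:R : R) => n jj ii hh mm N0.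
by field.
Qed.
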